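(* Let $\{\gamma_k\}$ be strictly positive numbers with $\gamma_k\to\infty$, $\{g_k\}$ probability generating functions, $G_k(z)=k\gamma_k[g_k(e^{-z/k})-e^{-z/k}]$ for $z\ge0$, and $$v_k(t,\lambda)=-k\log g_k^{[\gamma_kt]}(e^{-\lambda/k}),\qquad t,\lambda\ge0,$$ where $g_k^n$ is the $n$-fold iterate of $g_k$ ($g_k^0(z)=z$) and $[\cdot]$ is the integer part. If $\{G_k\}$ is uniformly Lipschitz on $[0,1]$, then there are constants $B,N\ge0$ such that $v_k(t,\lambda)\le\lambda e^{Bt}$ for all $t,\lambda\ge0$ and all $k\ge N$. *)

(* Defs.v *)
From mathcomp Require Import all_boot all_order all_algebra.
From mathcomp Require Import all_classical all_reals all_analysis.
Set Implicit Arguments. Unset Strict Implicit. Unset Printing Implicit Defensive.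
Import Order.TTheory GRing.Theory Num.Theory numFieldNormedType.Exports.
Local Open Scope ring_scope.
Local Open Scope classical_set_scope.

Definition is_pgf {R : realType} (g : R -> R) : Prop :=
  exists p : nat -> R,
    (forall n, 0 <= p n) /\
    ((fun N => \sum_(n < N) p n) @ \oo --> (1 : R)) /\
    (forall s : R, 0 <= s <= 1 ->
       (fun N => \sum_(n < N) p n * s ^+ n) @ \oo --> g s).

Definition Gk {R : realType} (gamma : nat -> R) (g : nat -> R -> R)
  (k : nat) (z : R) : R :=
  k%:R * gamma k * (g k (expR (- (z / k%:R))) - expR (- (z / k%:R))).

Definition vk {R : realType} (gamma : nat -> R) (g : nat -> R -> R)
  (k : nat) (t lambda : R) : R :=
  - (k%:R * ln (iter (Num.truncn (gamma k * t)) (g k) (expR (- (lambda / k%:R))))).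

Definition unif_lipschitz01 {R : realType} (F : nat -> R -> R) : Prop :=
  exists L : R, forall k (x y : R), 0 <= x <= 1 -> 0 <= y <= 1 ->
    `|F k x - F k y| <= L * `|x - y|.

(* Main.v *)
Require Import Defs.
From mathcomp Require Import all_boot all_order all_algebra.
From mathcomp Require Import all_classical all_reals all_analysis.
From mathcomp Require Import ring lra.
Import Order.TTheory GRing.Theory Num.Theory numFieldNormedType.Exports.
Local Open Scope ring_scope.
Local Open Scope classical_set_scope.

Lemma lim_ge_ev (R : realType) (u : nat -> R) (l a : R) :
  u @ \oo --> l -> (\forall n \near \oo, a <= u n) -> a <= l.
Proof.
move=> ul ev; rewrite leNgt; apply/negP => la.
have [n [h1 h2]] := filter_ex (filterI ev (cvgr_lt l ul a la)).
by move: (le_lt_trans h1 h2); rewrite ltxx.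
Qed.

Lemma lim_le_ev (R : realType) (u : nat -> R) (l a : R) :
  u @ \oo --> l -> (\forall n \near \oo, u n <= a) -> l <= a.
Proof.
move=> ul ev; rewrite leNgt; apply/negP => la.
have [n [h1 h2]] := filter_ex (filterI ev (cvgr_gt l ul a la)).
by move: (le_lt_trans h1 h2); rewrite ltxx.
Qed.

Lemma psum_mono (R : realType) (f : nat -> R) (N M : nat) :
  (forall n, 0 <= f n) -> (N <= M)%N -> \sum_(n < N) f n <= \sum_(n < M) f n.
Proof.
move=> f0 NM; rewrite -!(big_mkord xpredT) (big_cat_nat (leq0n N) NM) /=.
by rewrite lerDl sumr_ge0.
Qed.

Lemma psum_le_lim (R : realType) (f : nat -> R) l N :
  (forall n, 0 <= f n) -> (fun M => \sum_(n < M) f n) @ \oo --> l ->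
  \sum_(n < N) f n <= l.
Proof.
move=> f0 fl; apply: (@lim_ge_ev R (fun M => \sum_(n < M) f n) l); first exact: fl.
exists N => // M /= NM.
exact: psum_mono.
Qed.

Lemma pow_ineq (R : realType) (s : R) n : 0 <= s <= 1 ->
  n%:R * (1 - s) * s ^+ n <= 1 - s ^+ n.
Proof.
move=> /andP[s0 s1]; elim: n => [|n IH]; first by rewrite expr0 subrr mulr1 mul0r.
have sn0 : 0 <= s ^+ n by rewrite exprn_ge0.
have sn1 : s ^+ n <= 1 by rewrite exprn_ile1.
rewrite exprS -natr1.
have h1 := ler_wpM2l s0 IH.
have h2 : 0 <= (1 - s) * (1 - s * s ^+ n) by rewrite mulr_ge0 // subr_ge0 // mulr_ile1.
set t := s ^+ n in h1 h2 sn0 sn1 *; set x := n%:R in h1 *.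
have -> : (x + 1) * (1 - s) * (s * t) = s * (x * (1 - s) * t) + (1 - s) * s * t by ring.
have e1 : s * (1 - t) = s - s * t by ring.
have e2 : (1 - s) * (1 - s * t) = 1 - s * t - (s - s * s * t) by ring.
have e3 : (1 - s) * s * t = s * t - s * s * t by ring.
rewrite e3; rewrite e1 in h1; rewrite e2 in h2.
lra.
Qed.

Section PGF.
Variables (R : realType) (p : nat -> R) (h : R -> R).
Hypothesis p0 : forall n, 0 <= p n.
Hypothesis hP : (fun N => \sum_(n < N) p n) @ \oo --> (1 : R).
Hypothesis hS : forall s : R, 0 <= s <= 1 ->
  (fun N => \sum_(n < N) p n * s ^+ n) @ \oo --> h s.

Lemma pgf_one : h 1 = 1.
Proof.
have := @hS 1 ltac:(by rewrite ler01 lexx).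
have -> : (fun N => \sum_(n < N) p n * 1 ^+ n) = (fun N => \sum_(n < N) p n).
  by apply: funext => N; apply: eq_bigr => i _; rewrite expr1n mulr1.
move=> H; exact: (cvg_unique _ H hP).
Qed.

Lemma pgf_P_le1 N : \sum_(n < N) p n <= 1.
Proof. exact: psum_le_lim. Qed.

Lemma pgf_partial_le s N : 0 <= s <= 1 -> \sum_(n < N) p n * s ^+ n <= h s.
Proof.
move=> /[dup] s01 /andP[s0 s1].
apply: (@psum_le_lim R (fun n => p n * s ^+ n) (h s) N); last exact: hS.
by move=> n; rewrite mulr_ge0 // exprn_ge0.
Qed.

Lemma pgf_le1 s : 0 <= s <= 1 -> h s <= 1.
Proof.
move=> /[dup] s01 /andP[s0 s1]; apply: (@lim_le_ev R (fun N => \sum_(n < N) p n * s ^+ n) (h s) 1 (hS s s01)).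
near=> N; apply: le_trans (pgf_P_le1 N); apply: ler_sum => i _.
by rewrite ler_piMr // exprn_ile1.
Unshelve. all: by end_near.
Qed.

Lemma pgf_sub s N : 0 <= s <= 1 ->
  \sum_(n < N) p n * (1 - s ^+ n) <= 1 - h s.
Proof.
move=> /[dup] s01 /andP[s0 s1].
apply: (@psum_le_lim R (fun n => p n * (1 - s ^+ n)) (1 - h s) N).
  by move=> n; rewrite mulr_ge0 // subr_ge0 exprn_ile1.
have -> : (fun M => \sum_(n < M) p n * (1 - s ^+ n)) =
  (fun M => \sum_(n < M) p n - \sum_(n < M) p n * s ^+ n).
  apply: funext => M /=; rewrite -sumrB; apply: eq_bigr => i _.
  by rewrite mulrBr mulr1.
exact: (cvgB hP (hS s s01)).
Qed.

Lemma pgf_lower_exp (mu y : R) : (forall N, \sum_(n < N) p n * n%:R <= mu) ->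
  0 < y <= 1 -> expR (mu * ln y) <= h y.
Proof.
move=> Mmu /andP[y0 y1].
have y01 : 0 <= y <= 1 by rewrite ltW.
set x := ln y; set E := expR (mu * x).
have x0 : x <= 0 by exact: ln_le0.
have E0 : 0 < E by exact: expR_gt0.
pose a N := E * (1 - mu * x) * (\sum_(n < N) p n) + E * mu * x.
have acvg : a @ \oo --> E.
  have -> : E = E * (1 - mu * x) * 1 + E * mu * x by ring.
  apply: cvgD; last exact: cvg_cst.
  exact: cvgMl_tmp.
apply: (@lim_le_ev R a E (h y) acvg); near=> N.
apply: le_trans (pgf_partial_le y N y01).
have key : forall n : nat, p n * (E * (1 + (n%:R - mu) * x)) <= p n * y ^+ n.
  move=> n; apply: ler_wpM2l => //.
  have -> : y ^+ n = expR (n%:R * x) by rewrite expRM_natl lnK // posrE.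
  have -> : n%:R * x = mu * x + (n%:R - mu) * x by ring.
  by rewrite expRD /E ler_wpM2l ?expR_ge1Dx // ltW.
have hsum : \sum_(n < N) p n * (E * (1 + (n%:R - mu) * x)) <= \sum_(n < N) p n * y ^+ n.
  by apply: ler_sum => i _; exact: key.
apply: le_trans hsum.
have -> : \sum_(n < N) p n * (E * (1 + (n%:R - mu) * x)) =
   E * (\sum_(n < N) p n) + (E * x) * (\sum_(n < N) p n * n%:R)
   - (E * mu * x) * (\sum_(n < N) p n).
  rewrite !mulr_sumr -big_split -sumrB /=; apply: eq_bigr => i _; ring.
rewrite /a.
have h1 : (E * x) * mu <= (E * x) * (\sum_(n < N) p n * n%:R).
  have Ex : E * x <= 0 by rewrite mulr_ge0_le0 // ltW.
  have := Mmu N; nra.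
lra.
Unshelve. all: by end_near.
Qed.

Lemma pgf_mean_bound (k : nat) (ga L : R) : (0 < k)%N -> 2 <= ga -> 0 <= L ->
  (forall z, 0 <= z <= 1 ->
     expR (- (z / k%:R)) - L * z / (k%:R * ga) <= h (expR (- (z / k%:R)))) ->
  forall N, \sum_(n < N) p n * n%:R <= 1 + (4 * L + 2) / ga.
Proof.
move=> k0 g2 L0 Hlow N.
have ga0 : 0 < ga by apply: lt_le_trans g2.
have k1 : 1 <= k%:R :> R by rewrite ler1n.
have kpos : 0 < k%:R :> R by apply: lt_le_trans k1.
set u := ga^-1.
have u0 : 0 < u by rewrite invr_gt0.
have u2 : u <= 2^-1 by rewrite /u lef_pV2 ?posrE.
have N1 : 1 <= (N.+1)%:R :> R by rewrite ler1n.
set z := ((N.+1)%:R * ga)^-1.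
have z0 : 0 < z by rewrite invr_gt0 mulr_gt0 // (lt_le_trans ltr01 N1).
have zu : z <= u.
  rewrite /z /u invfM; apply: ler_piMl; first by rewrite invr_ge0 ltW.
  by rewrite invf_le1 // (lt_le_trans ltr01 N1).
have Nz : N%:R * z <= u.
  rewrite /z invfM mulrA; apply: ler_piMl; first by rewrite invr_ge0 ltW.
  by rewrite ler_pdivrMr ?mul1r ?ler_nat // (lt_le_trans ltr01 N1).
set y := z / k%:R.
have y0 : 0 < y by rewrite divr_gt0.
have yz : y <= z by rewrite ler_pdivrMr // ler_peMr // ltW.
have Ny : N%:R * y <= u.
  apply: le_trans Nz; rewrite ler_wpM2l //; exact: yz.
set s := expR (- y).
have s0 : 0 < s by exact: expR_gt0.
have hs1 : 1 - y <= s by have := expR_ge1Dx (- y); rewrite /s; lra.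
have hsy : s * (1 + y) <= 1.
  have e : s * expR y = 1 by rewrite /s expRN mulVf // gt_eqF // expR_gt0.
  rewrite -[X in _ <= X]e; apply: ler_wpM2l; [exact: ltW | exact: expR_ge1Dx].
have sN : 1 - u <= s ^+ N.
  rewrite /s -expRM_natl; apply: le_trans (expR_ge1Dx _); lra.
have s1 : s <= 1 by nra.
have s01 : 0 <= s <= 1 by rewrite ltW.
have Hl := Hlow z ltac:(by rewrite ltW //= (le_trans zu) // (le_trans u2) // invf_le1 // ler1n).
have eL : L * z / (k%:R * ga) = L * y * u by rewrite /y /u invfM; ring.
rewrite eL -/y -/s in Hl.
have Hsub := pgf_sub s N s01.
set M := \sum_(n < N) p n * n%:R.
have Hm : (1 - s) * s ^+ N * M <= \sum_(n < N) p n * (1 - s ^+ n).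
  rewrite /M mulr_sumr; apply: ler_sum => i _.
  have hi := @pow_ineq R s i s01.
  have si : s ^+ N <= s ^+ i by apply: ler_wiXn2l => //; [exact: ltW | exact: ltnW].
  have pi0 := p0 i.
  have c0 : 0 <= (1 - s) by lra.
  have i0 : 0 <= i%:R :> R by [].
  have : i%:R * (1 - s) * s ^+ N <= 1 - s ^+ i.
    apply: le_trans hi; rewrite ler_wpM2l // mulr_ge0 //.
  move=> h2; have := ler_wpM2l pi0 h2.
  have -> : (1 - s) * s ^+ N * (p i * i%:R) = p i * (i%:R * (1 - s) * s ^+ N) by ring.
  done.
set c := 1 - s; set t := s ^+ N.
have c0 : 0 < c by rewrite /c; nra.
have hyc : y <= 2 * c by rewrite /c; nra.
have t0 : 0 < t by rewrite /t; lra.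
have step1 : M * c * t <= c * (1 + 2 * L * u).
  have : L * y * u <= 2 * L * u * c.
    have : 0 <= L * u by rewrite mulr_ge0 // ltW.
    nra.
  have : c * t * M <= 1 - h s by exact: le_trans Hm Hsub.
  rewrite /c; lra.
have step2 : 1 + 2 * L * u <= t * (1 + (4 * L + 2) * u).
  have h1 : 0 <= (2 * L + 1) * u * (1 - 2 * u) by apply: mulr_ge0; [apply: mulr_ge0; lra | lra].
  have h2 : 0 <= 1 + (4 * L + 2) * u by apply: addr_ge0; [lra | apply: mulr_ge0; lra].
  have : (1 - u) * (1 + (4 * L + 2) * u) <= t * (1 + (4 * L + 2) * u).
    by rewrite ler_wpM2r.
  nra.
have : M * (c * t) <= (1 + (4 * L + 2) * u) * (c * t).
  have : c * (1 + 2 * L * u) <= c * (t * (1 + (4 * L + 2) * u)) by rewrite ler_wpM2l // ltW.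
  nra.
by rewrite ler_pM2r ?mulr_gt0.
Qed.

End PGF.

Theorem lemma2p1p5 (R : realType) (gamma : nat -> R) (g : nat -> R -> R)
  (hgpos : forall k, 0 < gamma k)
  (hginf : gamma @ \oo --> +oo)
  (hpgf : forall k, is_pgf (g k))
  (hlip : unif_lipschitz01 (Gk gamma g)) :
  exists (B : R) (N : nat), 0 <= B /\
    forall k, (N <= k)%N -> forall t lambda : R, 0 <= t -> 0 <= lambda ->
      vk gamma g k t lambda <= lambda * expR (B * t).
Proof.
have [L0 HL] := hlip.
set L := `|L0|.
have L0p : 0 <= L by rewrite /L normr_ge0.
have HL' : forall k x y, 0 <= x <= 1 -> 0 <= y <= 1 ->
    `|Gk gamma g k x - Gk gamma g k y| <= L * `|x - y|.
  move=> k x y hx hy; apply: le_trans (HL k x y hx hy) _.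
  by rewrite ler_wpM2r // ler_norm.
have [N0 _ HN0] := (cvgryPge gamma).1 hginf 2.
exists (4 * L + 2), (maxn N0 1); split.
  by rewrite addr_ge0 // mulr_ge0.
move=> k hk t lam t0 l0.
have k0 : (0 < k)%N by apply: leq_trans hk; rewrite leq_maxr.
have hg2 : 2 <= gamma k by apply: HN0; apply: leq_trans hk; rewrite leq_maxl.
have [p [p0 [hP hS]]] := hpgf k.
have kpos : 0 < k%:R :> R by rewrite ltr0n.
have ga0 : 0 < gamma k by apply: lt_le_trans hg2.
have h1 : g k 1 = 1 by exact: (@pgf_one R p (g k) hP hS).
have Hlow : forall z, 0 <= z <= 1 ->
     expR (- (z / k%:R)) - L * z / (k%:R * gamma k) <= g k (expR (- (z / k%:R))).
  move=> z hz.
  have := HL' k z 0 hz ltac:(by rewrite lexx ler01).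
  have -> : Gk gamma g k 0 = 0.
    by rewrite /Gk mul0r oppr0 expR0 h1 subrr mulr0.
  rewrite subr0 subr0 (ger0_norm (proj1 (andP hz))).
  move=> hG.
  have hG2 : - Gk gamma g k z <= L * z.
    by apply: le_trans hG; rewrite -normrN ler_norm.
  rewrite /Gk in hG2.
  set e := expR (- (z / k%:R)) in hG2 *.
  have kg : 0 < k%:R * gamma k by rewrite mulr_gt0.
  suff : e - g k e <= L * z / (k%:R * gamma k) by lra.
  rewrite ler_pdivlMr //.
  have -> : (e - g k e) * (k%:R * gamma k) = - (k%:R * gamma k * (g k e - e)) by ring.
  exact: hG2.
set D := 4 * L + 2.
set mu := 1 + D / gamma k.
have Mb := @pgf_mean_bound R p (g k) p0 hP hS k (gamma k) L k0 hg2 L0p Hlow.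
have low : forall y, 0 < y <= 1 -> expR (mu * ln y) <= g k y.
  by move=> y hy; apply: (@pgf_lower_exp R p (g k) p0 hP hS mu y _ hy).
have D0 : 0 <= D by rewrite /D addr_ge0 // mulr_ge0.
have mu0 : 0 <= mu by rewrite /mu addr_ge0 // divr_ge0 // ltW.
set s0 := expR (- (lam / k%:R)).
have it : forall j, 0 < iter j (g k) s0 <= 1 /\
    - ln (iter j (g k) s0) <= mu ^+ j * (lam / k%:R).
  elim=> [|j [/andP[y0 y1] IH]].
    rewrite /= /s0 expR_gt0 /= expR_le1 expRK opprK expr0 mul1r lexx; split => //.
    by rewrite oppr_le0 divr_ge0 // ltW.
  rewrite iterS; set y := iter j (g k) s0 in y0 y1 IH *.
  have hl := low y ltac:(by rewrite y0 y1).
  have hy0 : 0 < g k y by apply: lt_le_trans hl; exact: expR_gt0.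
  have hy1 : g k y <= 1 by apply: (@pgf_le1 R p (g k) p0 hP hS); rewrite ltW.
  split; first by rewrite hy0 hy1.
  have : mu * ln y <= ln (g k y).
    by rewrite -[X in X <= _]expRK ler_ln ?posrE ?expR_gt0.
  rewrite exprS.
  have := ler_wpM2l mu0 IH.
  nra.
rewrite /vk.
set n := Num.truncn (gamma k * t).
have [_ hn] := it n.
have hn2 : - (k%:R * ln (iter n (g k) s0)) <= lam * mu ^+ n.
  have := ler_wpM2l (ltW kpos) hn.
  have -> : k%:R * (mu ^+ n * (lam / k%:R)) = lam * mu ^+ n.
    by field; rewrite gt_eqF.
  by rewrite mulrN.
apply: le_trans hn2 _; rewrite ler_wpM2l //.
have hmu : mu <= expR (D / gamma k) by exact: expR_ge1Dx.
apply: le_trans (_ : expR (D / gamma k) ^+ n <= _).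
  by apply: lerXn2r; rewrite ?posrE ?nnegrE // ltW // expR_gt0.
rewrite -expRM_natl ler_expR.
have ntr : n%:R <= gamma k * t by rewrite /n truncn_le mulr_ge0 // ltW.
have : n%:R * (D / gamma k) <= (gamma k * t) * (D / gamma k).
  by rewrite ler_wpM2r // divr_ge0 // ltW.
have -> : gamma k * t * (D / gamma k) = D * t by field; rewrite gt_eqF.
done.
Qed.
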